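(* If $f,g\in \ker\mathfrak{d}$, then $[f,g]_n\in \ker\mathfrak{d}$.
   Context: $\mathscr{P}$ is the set of partitions, $r_m(\lambda)$ the number of parts of $\lambda$ equal to $m$. The Faulhaber polynomial $F_l$ is the polynomial with zero constant term with $F_l(n)=\sum_{i=1}^n i^{l-1}$ for $n\ge1$. For $k\ge0,l\ge1$, $k+l$ even, $T_{k,l}(\lambda)=-\frac{B_{k+l}}{2(k+l)}(\delta_{l,1}+\delta_{k,0})+\sum_{m\ge1}m^kF_l(r_m(\lambda))$, with conventions $T_{0,0}\equiv T_{-1,1}\equiv-1$ and $T_{k,l}\equiv0$ for other $k<0$ or $l<1$. $\mathcal{T}$ is the algebra generated by the $T_{k,l}$; it has a basis of induced products $T_{k_1,l_1}\odot\cdots\odot T_{k_n,l_n}$ (with $\langle f\odot g\rangle_{\vec u}=\langle f\rangle_{\vec u}\langle g\rangle_{\vec u}$, $\langle f\rangle_{\vec u}=\sum_\lambda f(\lambda)u_{\lambda_1}u_{\lambda_2}\cdots/\sum_\lambda u_{\lambda_1}u_{\lambda_2}\cdots$), graded by assigning $T_{k,l}$ weight $k+l$. Derivations on $\mathcal{T}$: $D\,T_{k,l}=T_{k+1,l+1}$, $W\,T_{k,l}=(k+l)T_{k,l}$, $\mathfrak{d}\,T_{k,l}=k(l-1)T_{k-1,l-1}-\tfrac12\delta_{k+l-2}$ ($\delta_{k+l-2}=1$ iff $k+l=2$). For $f$ of weight $k$, $g$ of weight $l$ in $\mathcal{T}$ and $n\ge0$, the $n$th Rankin–Cohen bracket is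 $[f,g]_n=\sum_{r+s=n}(-1)^r\binom{k+n-1}{s}\binom{l+n-1}{r}D^rf\odot D^sg$. *)

(* Defs.v *)
From HB Require Import structures.
From mathcomp Require Import all_boot all_order all_algebra.
From mathcomp Require Import finmap.
From mathcomp Require Import monalg.
Set Implicit Arguments.
Unset Strict Implicit.
Unset Printing Implicit Defensive.
Import Order.TTheory GRing.Theory Num.Theory.
Local Open Scope ring_scope.

Definition Tidx := {p : nat * nat | (0 < p.2)%N && ~~ odd (p.1 + p.2)}.

(* the algebra T: polynomials over Q in the (countably many) generators;
   ring multiplication plays the role of the induced product (.) *)
Definition TT := {malg rat[cmonom Tidx]}.

Definition Tgen (i : Tidx) : TT := << ucm i >>.

Definition T (k l : int) : TT :=
  if (k == 0) && (l == 0) then -1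
  else if (k == -1) && (l == 1) then -1
  else match k, l with
       | Posz k', Posz l' =>
           if insub (k', l') is Some i then Tgen i else 0
       | _, _ => 0
       end.

Definition Tk (i : Tidx) : int := (val i).1.
Definition Tl (i : Tidx) : int := (val i).2.

(* the unique derivation of TT sending the generator i to delta i *)
Definition derivation_ext (delta : Tidx -> TT) (f : TT) : TT :=
  \sum_(m <- msupp f)
     f@_m *: \sum_(i <- finsupp (cmonom_val m))
                ((cmonom_val m i)%:R * << divcm m (ucm i) >> * delta i).

Definition Dop : TT -> TT :=
  derivation_ext (fun i => T (Tk i + 1) (Tl i + 1)).

Definition Wop : TT -> TT :=
  derivation_ext (fun i => (Tk i + Tl i)%:~R *: Tgen i).

Definition dop : TT -> TT :=
  derivation_ext (fun i =>
    (Tk i * (Tl i - 1))%:~R *: T (Tk i - 1) (Tl i - 1)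
    - (if Tk i + Tl i == 2 then (1 / 2 : rat) else 0)%:A).

Definition mweight_T (m : cmonom Tidx) : nat :=
  (\sum_(i <- finsupp (cmonom_val m)) cmonom_val m i * ((val i).1 + (val i).2))%N.

Definition homog (w : nat) (f : TT) : bool :=
  all (fun m => mweight_T m == w) (msupp f).

Definition RCbracket (k l n : nat) (f g : TT) : TT :=
  \sum_(r < n.+1)
    ((-1) ^+ r * ('C((k + n).-1, n - r) * 'C((l + n).-1, r))%:R)
      *: (iter r Dop f * iter (n - r) Dop g).

(* Main.v *)
Require Import Defs.
From HB Require Import structures.
From mathcomp Require Import all_boot all_order all_algebra.
From mathcomp Require Import finmap monalg.
From mathcomp Require Import ring zify.
Set Implicit Arguments.
Unset Strict Implicit.
Unset Printing Implicit Defensive.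
Import Order.TTheory GRing.Theory Num.Theory.
Local Open Scope ring_scope.


Section Abstract.
Variable A : comAlgType rat.

Definition islin (phi : A -> A) := forall (a : rat) x y, phi (a *: x + y) = a *: phi x + phi y.
Definition isleib (phi : A -> A) := forall x y, phi (x * y) = phi x * y + x * phi y.

Section Lin.
Variable phi : A -> A.
Hypothesis Hl : islin phi.
Lemma lin0 : phi 0 = 0.
Proof.
have := Hl 1 0 0; rewrite !scale1r addr0 => h.
by apply: (addrI (phi 0)); rewrite addr0 -h.
Qed.
Lemma linD x y : phi (x + y) = phi x + phi y.
Proof. by have := Hl 1 x y; rewrite !scale1r. Qed.
Lemma linZ a x : phi (a *: x) = a *: phi x.
Proof. by have := Hl a x 0; rewrite !addr0 lin0 addr0. Qed.
Lemma linsum n (F : 'I_n -> A) : phi (\sum_(i < n) F i) = \sum_(i < n) phi (F i).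
Proof. exact: (big_morph phi linD lin0). Qed.
End Lin.

Variables (D d W : A -> A).
Hypotheses (lD : islin D) (ld : islin d) (lW : islin W) (LD : isleib D) (Ld : isleib d).
Hypothesis HdD : forall x, d (D x) = D (d x) + W x.
Hypothesis HWD : forall x, W (D x) = D (W x) + 2%:R *: D x.

Definition RCb (k l n : nat) (f g : A) : A :=
  \sum_(r < n.+1)
    ((-1) ^+ r * ('C((k + n).-1, n - r) * 'C((l + n).-1, r))%:R)
      *: (iter r D f * iter (n - r) D g).

Lemma Witer k f j : W f = k%:R *: f -> W (iter j D f) = (k + 2 * j)%:R *: iter j D f.
Proof.
move=> Wf; elim: j => [|j IH]; first by rewrite muln0 addn0.
rewrite iterS HWD IH (linZ lD) -scalerDl; congr (_ *: _).
rewrite -natrD; congr (_%:R); rewrite mulnS; ring.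
Qed.

Definition cc (k j : nat) : rat := j%:R * (k%:R + j%:R - 1).

Lemma diter k f j : W f = k%:R *: f -> d f = 0 ->
  d (iter j D f) = cc k j *: iter j.-1 D f.
Proof.
move=> Wf df; elim: j => [|j IH]; first by rewrite /cc mul0r scale0r.
rewrite iterS HdD IH (linZ lD) (Witer j Wf).
have -> : cc k j *: D (iter j.-1 D f) = cc k j *: iter j D f.
  by case: j {IH} => [|j]; rewrite /cc ?mul0r ?scale0r.
rewrite -scalerDl /=; congr (_ *: _).
rewrite /cc -addn1 !natrD ?natrM. ring.
Qed.

Lemma cc0 k : cc k 0 = 0.
Proof. by rewrite /cc mul0r. Qed.

Lemma aux_rat (e p q u v P Q U V : rat) : p * q * (u * v) = P * Q * (U * V) ->
  (-1 * e) * (p * q) * (u * v) + e * (P * Q) * (U * V) = 0.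
Proof.
move=> h; rewrite (_ : -1 * e * (p * q) * (u * v) = - (e * (p * q * (u * v)))); last by ring.
rewrite h; ring.
Qed.

Lemma coef_id (k l n r : nat) : (r < n)%N ->
  (-1) ^+ r.+1 * ('C((k + n).-1, n - r.+1) * 'C((l + n).-1, r.+1))%:R * cc k r.+1
  + (-1) ^+ r * ('C((k + n).-1, n - r) * 'C((l + n).-1, r))%:R * cc l (n - r) = 0 :> rat.
Proof.
move=> rn; have [s ->] : exists s, n = (r + s.+1)%N by exists (n - r.+1)%N; lia.
have -> : (r + s.+1 - r.+1 = s)%N by lia.
have -> : (r + s.+1 - r = s.+1)%N by lia.
have -> : (k + (r + s.+1)).-1 = (k + r + s)%N by lia.
have -> : (l + (r + s.+1)).-1 = (l + s + r)%N by lia.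
have E : ('C(k + r + s, s) * 'C(l + s + r, r.+1) * (r.+1 * (k + r))
        = 'C(k + r + s, s.+1) * 'C(l + s + r, r) * (s.+1 * (l + s)))%N.
  have E1 := mul_bin_left (l + s + r) r.
  have E2 := mul_bin_left (k + r + s) s.
  rewrite addnK in E1; rewrite addnK in E2.
  have -> : ('C(k + r + s, s) * 'C(l + s + r, r.+1) * (r.+1 * (k + r))
     = 'C(k + r + s, s) * (k + r) * (r.+1 * 'C(l + s + r, r.+1)))%N by ring.
  rewrite E1.
  have -> : ('C(k + r + s, s.+1) * 'C(l + s + r, r) * (s.+1 * (l + s))
     = (s.+1 * 'C(k + r + s, s.+1)) * 'C(l + s + r, r) * (l + s))%N by ring.
  rewrite E2; ring.
rewrite /cc exprS.
have -> : (k%:R + (r.+1)%:R - 1 : rat) = (k + r)%:R by rewrite -addn1 !natrD; ring.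
have -> : (l%:R + (s.+1)%:R - 1 : rat) = (l + s)%:R by rewrite -addn1 !natrD; ring.
have := congr1 (fun x : nat => x%:R : rat) E; rewrite /= !natrM => E'.
apply: aux_rat; exact: E'.
Qed.

Lemma RCb_ker k l n f g : W f = k%:R *: f -> W g = l%:R *: g -> d f = 0 -> d g = 0 ->
  d (RCb k l n f g) = 0.
Proof.
move=> Wf Wg df dg.
rewrite /RCb (linsum ld).
under eq_bigr => r _ do rewrite (linZ ld) Ld (diter _ Wf df) (diter _ Wg dg) -scalerAl -scalerAr scalerDr.
rewrite big_split /=.
rewrite big_ord_recl /= cc0 scale0r scaler0 add0r.
rewrite big_ord_recr /= subnn cc0 scale0r scaler0 addr0.
rewrite -big_split big1 // => r _ /=.
rewrite -subnS !scalerA -scalerDl coef_id ?scale0r //.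
Qed.

End Abstract.

Lemma zmod_aux (V : zmodType) (a b c d e f : V) :
  a + b - (c + d) - (e + f) = a - c - e + (b - d - f).
Proof. by rewrite !opprD [X in X + _ = _]addrACA (addrACA (a - c)). Qed.

Section LeibAbs.
Variable A : comAlgType rat.
Variable phi : A -> A.
Hypothesis lphi : islin phi.
Definition Lr x y := phi (x * y) = phi x * y + x * phi y.

Lemma L0 y : Lr 0 y.
Proof. by rewrite /Lr mul0r (lin0 lphi) mul0r mul0r add0r. Qed.
Lemma LD x1 x2 y : Lr x1 y -> Lr x2 y -> Lr (x1 + x2) y.
Proof.
rewrite /Lr => h1 h2; rewrite mulrDl (linD lphi) h1 h2 (linD lphi) mulrDl mulrDl.
by rewrite addrACA.
Qed.
Lemma LZ c x y : Lr x y -> Lr (c *: x) y.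
Proof.
rewrite /Lr => h; rewrite -(scalerAl c x y) (linZ lphi c (x * y)) h scalerDr (linZ lphi c x) -!scalerAl scalerAr.
by [].
Qed.
Lemma LC x y : Lr x y -> Lr y x.
Proof. by rewrite /Lr => h; rewrite (mulrC y x) h [LHS]addrC (mulrC x (phi y)) (mulrC (phi x) y). Qed.

Lemma leib1 : isleib phi -> phi 1 = 0.
Proof.
move=> Lp; have := Lp 1 1; rewrite !mul1r mulr1 => h.
by apply: (addrI (phi 1)); rewrite addr0 -h.
Qed.
End LeibAbs.

Section Comm.
Variable A : comAlgType rat.
Variables (p q h : A -> A) (c : rat).
Hypotheses (lp : islin p) (lq : islin q) (lh : islin h).
Hypotheses (Lp : isleib p) (Lq : isleib q) (Lh : isleib h).

Lemma comm_lin : islin (fun x => p (q x) - q (p x) - c *: h x).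
Proof.
move=> a x y /=; rewrite lq (linD lp) (linZ lp) lp (linD lq) (linZ lq) lh.
rewrite scalerDr !scalerBr !scalerA [c * a]mulrC.
exact: zmod_aux.
Qed.
Lemma comm_leib : isleib (fun x => p (q x) - q (p x) - c *: h x).
Proof.
move=> x y /=; rewrite Lq (linD lp) !Lp (linD lq) !Lq Lh.
rewrite -[c *: (h x * y + x * h y)]mulr_algl -[c *: h x]mulr_algl -[c *: h y]mulr_algl.
ring.
Qed.

Lemma comm_zero (x : A) : p (q x) - q (p x) - c *: h x = 0 -> p (q x) = q (p x) + c *: h x.
Proof. by move/eqP; rewrite subr_eq0 subr_eq addrC => /eqP. Qed.
End Comm.

Notation M := (cmonom Tidx).
Lemma UM (m1 m2 : M) : (<< mmul m1 m2 >> : TT) = << m1 >> * << m2 >>.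
Proof. rewrite malgM_def fgmulUU mulr1. f_equal. Qed.
Lemma UZ (c : rat) (m : M) : (<< c *g m >> : TT) = c *: << m >>.
Proof. rewrite malgZ_def /fgscale msuppU1 big_seq_fset1 mcoeffUU mulr1. f_equal. Qed.

Opaque mkmalgU fgzero fgone fgadd fgmul fgopp fgscale mkmalg divcm mulcm ucm onecm.

Lemma lin_ind (P : TT -> Prop) :
  P 0 -> (forall x y, P x -> P y -> P (x + y)) ->
  (forall c m, P (c *: << m >>)) -> forall f, P f.
Proof.
move=> P0 PD PU f; rewrite (monalgE f).
elim/big_ind: _ => // m _; rewrite UZ; exact: PU.
Qed.

Definition Lx (F : M -> TT) (f : TT) : TT := \sum_(m <- msupp f) f@_m *: F m.

Lemma Lxw F f d : (msupp f `<=` d)%fset -> Lx F f = \sum_(m <- d) f@_m *: F m.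
Proof.
move=> le; apply: big_fset_incl => // m _ /mcoeff_outdom ->; by rewrite scale0r.
Qed.

Lemma LxD F a f g : Lx F (a *: f + g) = a *: Lx F f + Lx F g.
Proof.
pose d := (msupp f `|` msupp g)%fset.
have h1 : (msupp (a *: f + g) `<=` d)%fset.
  apply: fsubset_trans (msuppD_le _ _) _.
  apply: fsetSU; exact: msuppZ_le.
rewrite (Lxw F h1) (Lxw F (fsubsetUl (msupp f) (msupp g))).
rewrite (Lxw F (fsubsetUr (msupp f) (msupp g))) scaler_sumr -big_split.
apply: eq_bigr => m _ /=; rewrite mcoeffD mcoeffZ scalerDl scalerA //.
Qed.

Lemma LxU F m : Lx F << m >> = F m.
Proof. rewrite /Lx msuppU1 big_seq_fset1 mcoeffUU scale1r //. Qed.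

Definition dm (delta : Tidx -> TT) (m : M) : TT :=
  \sum_(i <- finsupp (cmonom_val m))
     ((cmonom_val m i)%:R * << divcm m (ucm i) >> * delta i).

Lemma derE delta : derivation_ext delta = Lx (dm delta).
Proof. reflexivity. Qed.

Lemma dmw delta m d : (finsupp (cmonom_val m) `<=` d)%fset ->
  dm delta m = \sum_(i <- d) ((cmonom_val m i)%:R * << divcm m (ucm i) >> * delta i).
Proof.
move=> le; apply: big_fset_incl => // i _ H.
have -> : cmonom_val m i = 0%N by apply/eqP; rewrite cmE_eq0.
rewrite mul0r mul0r. f_equal. Qed.

Lemma divcm_mulr (m1 m2 : M) i : (0 < m2 i)%N ->
  divcm (mmul m1 m2) (ucm i) = mmul m1 (divcm m2 (ucm i)).
Proof.
move=> h; apply/eqP/cmP => j; rewrite divcmE !cmM divcmE ucmE.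
case: eqP => [<-|_]; last by rewrite !subn0.
by rewrite addnBA.
Qed.
Lemma ra1 (R : comRingType) (x y dd u : R) : (0%N)%:R * x * dd = u * ((0%N)%:R * y * dd).
Proof. by rewrite !mul0r mulr0. Qed.
Lemma ra2 (R : comRingType) (c y dd u : R) : c * (u * y) * dd = u * (c * y * dd).
Proof. by rewrite !mulrA [c * u]mulrC. Qed.
Lemma ra3 (R : comRingType) (x y dd u : R) : (0%N)%:R * x * dd = (0%N)%:R * y * dd * u.
Proof. by rewrite !mul0r. Qed.
Lemma ra4 (R : comRingType) (c y dd u : R) : c * (u * y) * dd = c * y * dd * u.
Proof. ring. Qed.

Lemma dmM delta (m1 m2 : M) :
  dm delta (mmul m1 m2) = << m1 >> * dm delta m2 + dm delta m1 * << m2 >>.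
Proof.
pose d := (finsupp (cmonom_val m1) `|` finsupp (cmonom_val m2))%fset.
rewrite (@dmw _ (mmul m1 m2) d); last by rewrite mdomD.
rewrite (@dmw _ m1 d) ?fsubsetUl // (@dmw _ m2 d) ?fsubsetUr //.
rewrite mulr_sumr mulr_suml -big_split; apply: eq_bigr => i _ /=.
rewrite cmM natrD !mulrDl [RHS]addrC.
have h2 : (m2 i)%:R * << divcm (mmul m1 m2) (ucm i) >> * delta i =
   << m1 >> * ((m2 i)%:R * << divcm m2 (ucm i) >> * delta i).
  have [->|h] := posnP (m2 i); first (exact: ra1).
  rewrite (divcm_mulr m1 h); rewrite UM; exact: ra2.
have h1 : (m1 i)%:R * << divcm (mmul m1 m2) (ucm i) >> * delta i =
   (m1 i)%:R * << divcm m1 (ucm i) >> * delta i * << m2 >>.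
  have [->|h] := posnP (m1 i); first (exact: ra3).
  rewrite (mulmC m1 m2) (divcm_mulr m2 h) UM; exact: ra4.
exact: (f_equal2 _ h1 h2).
Qed.


Lemma der_lin delta : islin (derivation_ext delta).
Proof. move=> a x y; rewrite derE; exact: LxD. Qed.

Lemma leib_of (phi : TT -> TT) (F : M -> TT) : islin phi ->
  (forall m, phi << m >> = F m) ->
  (forall m1 m2, F (mmul m1 m2) = << m1 >> * F m2 + F m1 * << m2 >>) ->
  isleib phi.
Proof.
move=> lphi hU hM x y; elim/lin_ind: x => [|x1 x2 h1 h2|c m1].
- exact: (L0 lphi).
- exact: (LD lphi h1 h2).
apply: (LZ lphi); elim/lin_ind: y => [|y1 y2 h1 h2|c2 m2].
- exact: (LC (L0 lphi _)).
- exact: (LC (LD lphi (LC h1) (LC h2))).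
apply: LC; apply: (LZ lphi); apply: LC.
rewrite /Lr -UM; apply: (etrans (hU _)); rewrite hM.
exact: (etrans (addrC _ _) (f_equal2 _ (f_equal2 _ (esym (hU m1)) (erefl _))
   (f_equal2 _ (erefl _) (esym (hU m2))))).
Qed.

Lemma der_leib delta : isleib (derivation_ext delta).
Proof.
apply: (@leib_of _ (dm delta)); first exact: der_lin.
  by move=> m; rewrite derE LxU.
exact: dmM.
Qed.

Lemma U1 : (<< mone >> : TT) = 1.
Proof. Transparent fgone. reflexivity. Opaque fgone. Qed.

Lemma divcm_self i : divcm (ucm i) (ucm i) = (mone : M).
Proof. by apply/eqP/cmP => j; rewrite divcmE subnn cm1. Qed.

Lemma der_gen delta i : derivation_ext delta (Tgen i) = delta i.
Proof.
rewrite /Tgen derE LxU /dm mdomU big_seq_fset1 ucmE eqxx divcm_self U1 mulr1 mul1r.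
by [].
Qed.

Lemma ring0 (R : ringType) (a b : R) : 0 * a + b * 0 = 0.
Proof. by rewrite mul0r mulr0 addr0. Qed.

Lemma der_zero phi : islin phi -> isleib phi -> (forall i, phi (Tgen i) = 0) ->
  forall x, phi x = 0.
Proof.
move=> lp Lp h0.
have mono : forall n (m : M), (mdeg m <= n)%N -> phi << m >> = 0.
  elim=> [|n IH] m hm.
    have -> : m = mone by apply: mdeg_eq0I; lia.
    rewrite U1; exact: leib1 Lp.
  have [->|nm] := eqVneq m mone; first by rewrite U1; exact: leib1 Lp.
  have : finsupp (cmonom_val m) != fset0.
    apply: contra nm => /eqP e; apply/cmP => j; rewrite cm1; apply/eqP.
    by rewrite cmE_eq0 e in_fset0.
  case/fset0Pn => i; rewrite -cmE_neq0 => hi.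
  pose m' := divcm m (ucm i).
  have em : m = mmul (ucm i) m'.
    apply/eqP/cmP => j; rewrite cmM ucmE divcmE ucmE.
    case: eqP => [<-|_] /=; last by rewrite add0n subn0.
    by rewrite add1n subn1 prednK // lt0n.
  have hd : (mdeg m' <= n)%N.
    have := mdegM (ucm i) m'; rewrite -em mdegU; lia.
  rewrite em UM Lp.
  exact: (etrans (f_equal2 _ (f_equal2 _ (h0 i) (erefl _)) (f_equal2 _ (erefl _) (IH m' hd))) (ring0 _ _)).
move=> x; elim/lin_ind: x => [|x y hx hy|c m].
- exact: lin0 lp.
- by rewrite (linD lp) hx hy addr0.
by rewrite (linZ lp) (mono _ m (leqnn _)) scaler0.
Qed.

Lemma T_gen (a b : nat) (H : (0 < b)%N && ~~ odd (a + b)) :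
  T a%:Z b%:Z = Tgen (exist _ (a, b) H).
Proof.
move: H; case: b => [|b] H; first by [].
rewrite /T.
have -> : (b.+1%:Z == 0) = false by [].
have -> : (a%:Z == -1) = false by [].
rewrite andbF /=.
rewrite (@insubT _ (fun p : nat * nat => (0 < p.2)%N && ~~ odd (p.1 + p.2)) _ (a, b.+1) H).
by [].
Qed.

Lemma PS (n : nat) : (n.+1)%:Z - 1 = n%:Z.
Proof. by rewrite intS addrC addKr. Qed.

Lemma Hsucc (a b : nat) : (0 < b)%N && ~~ odd (a + b) -> (0 < b.+1)%N && ~~ odd (a.+1 + b.+1).
Proof. by case/andP => _ h; rewrite addSn addnS /= negbK. Qed.

Lemma Dgen (a b : nat) (H : (0 < b)%N && ~~ odd (a + b)) :
  Dop (Tgen (exist _ (a, b) H)) = Tgen (exist _ (a.+1, b.+1) (Hsucc H)).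
Proof. rewrite /Dop der_gen /=; rewrite -!PoszD !addn1. exact: T_gen. Qed.

Lemma intn (n : nat) : (n%:Z)%:~R = n%:R :> rat.
Proof. by rewrite -pmulrn. Qed.

Lemma dgenS (a b : nat) (H : (0 < b)%N && ~~ odd (a + b)) :
  dop (Tgen (exist _ (a.+1, b.+1) (Hsucc H))) = (a.+1 * b)%:R *: Tgen (exist _ (a, b) H).
Proof.
rewrite /dop der_gen /Tk /Tl /= !PS (T_gen H) -PoszD -PoszM intn.
have -> : (Posz (a.+1 + b.+1) == 2) = false.
  case/andP: H => hb _; apply/negbTE; rewrite eqz_nat; lia.
by rewrite scale0r subr0.
Qed.

Lemma linB (A : comAlgType rat) (phi : A -> A) : islin phi -> forall x y, phi (x - y) = phi x - phi y.
Proof.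
move=> h x y; have := h (-1) y x; rewrite scaleN1r addrC => ->.
by rewrite scaleN1r addrC.
Qed.

Lemma Dop_lin : islin Dop. Proof. exact: der_lin. Qed.
Lemma dop_lin : islin dop. Proof. exact: der_lin. Qed.
Lemma Wop_lin : islin Wop. Proof. exact: der_lin. Qed.
Lemma Dop_leib : isleib Dop. Proof. exact: der_leib. Qed.
Lemma dop_leib : isleib dop. Proof. exact: der_leib. Qed.
Lemma Wop_leib : isleib Wop. Proof. exact: der_leib. Qed.

Lemma Dop_alg (e : rat) : Dop (e%:A) = 0.
Proof. by rewrite (linZ Dop_lin) (leib1 Dop_leib) scaler0. Qed.

Lemma Dsub_abs (A : comAlgType rat) (phi : A -> A) : islin phi -> isleib phi ->
  forall (c e : rat) (X : A), phi (c *: X - e%:A) = c *: phi X.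
Proof.
move=> l L c e X.
by rewrite (linB l) (linZ l e) (leib1 L) scaler0 subr0 (linZ l).
Qed.


Lemma Ddgen (a b : nat) (H : (0 < b)%N && ~~ odd (a + b)) :
  Dop (dop (Tgen (exist _ (a, b) H))) = (a * (b - 1))%:R *: Tgen (exist _ (a, b) H).
Proof.
rewrite /dop der_gen /Tk /Tl /=.
rewrite (Dsub_abs Dop_lin Dop_leib).
move: H; case: a => [|a] H.
  rewrite mul0r mul0n !scale0r. f_equal.
case: b H => [|[|b]] H.
- by exfalso; case/andP: (H).
- rewrite PS mulr0 muln0 !scale0r. f_equal.
rewrite !PS -PoszM intn.
have H' : (0 < b.+1)%N && ~~ odd (a + b.+1).
  by move: H; rewrite addSn addnS /= negbK.
rewrite (T_gen H') Dgen.
congr (_ *: Tgen (exist _ _ _)).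
exact: bool_irrelevance.
Qed.

Lemma Wgen (a b : nat) (H : (0 < b)%N && ~~ odd (a + b)) :
  Wop (Tgen (exist _ (a, b) H)) = (a + b)%:R *: Tgen (exist _ (a, b) H).
Proof. rewrite /Wop der_gen /Tk /Tl /= -PoszD intn. by []. Qed.

Definition Ds := locked Dop.
Definition ds := locked dop.
Definition Ws := locked Wop.
Definition Gs := locked Tgen.
Lemma DsE : Ds = Dop. Proof. by rewrite /Ds -lock. Qed.
Lemma dsE : ds = dop. Proof. by rewrite /ds -lock. Qed.
Lemma WsE : Ws = Wop. Proof. by rewrite /Ws -lock. Qed.
Lemma GsE : Gs = Tgen. Proof. by rewrite /Gs -lock. Qed.

Lemma Ds_lin : islin Ds. Proof. rewrite DsE; exact: der_lin. Qed.
Lemma ds_lin : islin ds. Proof. rewrite dsE; exact: der_lin. Qed.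
Lemma Ws_lin : islin Ws. Proof. rewrite WsE; exact: der_lin. Qed.
Lemma Ds_leib : isleib Ds. Proof. rewrite DsE; exact: der_leib. Qed.
Lemma ds_leib : isleib ds. Proof. rewrite dsE; exact: der_leib. Qed.
Lemma Ws_leib : isleib Ws. Proof. rewrite WsE; exact: der_leib. Qed.

Lemma Dsg (a b : nat) (H : (0 < b)%N && ~~ odd (a + b)) :
  Ds (Gs (exist _ (a, b) H)) = Gs (exist _ (a.+1, b.+1) (Hsucc H)).
Proof. rewrite DsE GsE; exact: Dgen. Qed.
Lemma dsgS (a b : nat) (H : (0 < b)%N && ~~ odd (a + b)) :
  ds (Gs (exist _ (a.+1, b.+1) (Hsucc H))) = (a.+1 * b)%:R *: Gs (exist _ (a, b) H).
Proof. rewrite dsE GsE; exact: dgenS. Qed.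
Lemma Ddsg (a b : nat) (H : (0 < b)%N && ~~ odd (a + b)) :
  Ds (ds (Gs (exist _ (a, b) H))) = (a * (b - 1))%:R *: Gs (exist _ (a, b) H).
Proof. rewrite DsE dsE GsE; exact: Ddgen. Qed.
Lemma Wsg (a b : nat) (H : (0 < b)%N && ~~ odd (a + b)) :
  Ws (Gs (exist _ (a, b) H)) = (a + b)%:R *: Gs (exist _ (a, b) H).
Proof. rewrite WsE GsE; exact: Wgen. Qed.

Lemma der_zero' phi : islin phi -> isleib phi -> (forall i, phi (Gs i) = 0) ->
  forall x, phi x = 0.
Proof. rewrite GsE; exact: der_zero. Qed.

Lemma sc_aux (A : comAlgType rat) (x y z : rat) (G : A) : x - y - z = 0 ->
  x *: G - y *: G - 1 *: (z *: G) = 0.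
Proof. by move=> h; rewrite scale1r -!scalerBl h scale0r. Qed.

Lemma sc_aux2 (A : comAlgType rat) (x y z : rat) (G : A) : x - y - z = 0 ->
  x *: G - y *: G - 2%:R *: G = 0 -> True.
Proof. by []. Qed.

Lemma HdD x : ds (Ds x) = Ds (ds x) + 1 *: Ws x.
Proof.
apply: (@comm_zero _ ds Ds Ws 1).
move: x; apply: (@der_zero' (fun x => ds (Ds x) - Ds (ds x) - 1 *: Ws x)).
- exact: (@comm_lin _ ds Ds Ws 1 ds_lin Ds_lin Ws_lin).
- exact: (@comm_leib _ ds Ds Ws 1 ds_lin Ds_lin ds_leib Ds_leib Ws_leib).
case=> [[a b] H] /=.
rewrite Dsg dsgS Ddsg Wsg; apply: sc_aux.
case: b H => [|b] H; first by case/andP: H.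
rewrite subn1 /= !natrM !natrD; ring.
Qed.

Lemma sc_aux3 (A : comAlgType rat) (x y : rat) (G : A) : x - y - 2%:R = 0 ->
  x *: G - y *: G - 2%:R *: G = 0.
Proof. by move=> h; rewrite -!scalerBl h scale0r. Qed.

Lemma HWD x : Ws (Ds x) = Ds (Ws x) + 2%:R *: Ds x.
Proof.
apply: (@comm_zero _ Ws Ds Ds 2%:R).
move: x; apply: (@der_zero' (fun x => Ws (Ds x) - Ds (Ws x) - 2%:R *: Ds x)).
- exact: (@comm_lin _ Ws Ds Ds 2%:R Ws_lin Ds_lin Ds_lin).
- exact: (@comm_leib _ Ws Ds Ds 2%:R Ws_lin Ds_lin Ws_leib Ds_leib Ds_leib).
case=> [[a b] H] /=.
rewrite Dsg. rewrite (Wsg H). rewrite (linZ Ds_lin) Dsg Wsg. rewrite /=. apply: sc_aux3.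
rewrite (_ : (a.+1 + b.+1 = (a + b) + 2)%N); last lia.
rewrite natrD; ring.
Qed.

Lemma aux_W (A : comAlgType rat) (n : nat) (s t : rat) (X U Y : A) :
  X * U = Y -> s = t -> n%:R * X * (s *: U) = (n%:R * t) *: Y.
Proof.
move=> h ->; rewrite -scalerAr -mulrA h !mulr_natl -scalerMnl -scalerMnr.
by [].
Qed.

Lemma fE (f : TT) : f = \sum_(m <- msupp f) f@_m *: << m >>.
Proof. rewrite {1}(monalgE f); apply: eq_bigr => m _; exact: UZ. Qed.

Lemma dmW (m : M) :
  dm (fun i => (Tk i + Tl i)%:~R *: Tgen i) m = (mweight_T m)%:R *: << m >>.
Proof.
rewrite /dm /mweight_T natr_sum scaler_suml big_seq [RHS]big_seq.
apply: eq_bigr => i hi.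
rewrite natrM; apply: aux_W.
  rewrite /Tgen; apply: (etrans (esym (UM _ _))); apply: (congr1 (fun m => << m >>)).
  apply/eqP/cmP => j; rewrite cmM divcmE ucmE.
  case: eqP => [<-|_] /=; last by rewrite subn0 addn0.
  rewrite -cmE_neq0 in hi.
  by rewrite addn1 subn1 prednK // lt0n.
by rewrite /Tk /Tl -PoszD intn.
Qed.

Lemma Whomog k f : homog k f -> Ws f = k%:R *: f.
Proof.
move=> hf; rewrite WsE /Wop derE /Lx big_seq.
rewrite (eq_bigr (fun m => k%:R *: (f@_m *: << m >>))) => [|m hm]; last first.
  by rewrite dmW (eqP (allP hf m hm)) !scalerA mulrC.
rewrite -scaler_sumr -big_seq.
exact: (congr1 _ (esym (fE f))).
Qed.

Unset Implicit Arguments.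

Theorem proposition5p3p2 (k l n : nat) (f g : TT) :
  homog k f -> homog l g ->
  dop f = 0 -> dop g = 0 ->
  dop (RCbracket k l n f g) = 0.
Proof.
move=> hf hg df dg.
have -> : RCbracket k l n f g = RCb Ds k l n f g by rewrite DsE.
have df' : ds f = 0 by rewrite dsE.
have dg' : ds g = 0 by rewrite dsE.
suff : ds (RCb Ds k l n f g) = 0 by rewrite dsE.
have HdD' : forall x, ds (Ds x) = Ds (ds x) + Ws x by move=> x; rewrite HdD scale1r.
exact: (RCb_ker Ds_lin ds_lin ds_leib HdD' HWD n (Whomog hf) (Whomog hg) df' dg').
Qed.
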